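(* Let $P,Q\in\mathcal{PP}(n)$ with $P\preceq Q$, and let $(i,j)\in E(P)$ be such that $E(Q)=E(P)\setminus\{(i,j)\}$. Then $i,j$ are two consecutive letters in the word representing $\Psi_n^{-1}(P)$, and the word representing $\Psi_n^{-1}(Q)$ is obtained from that of $\Psi_n^{-1}(P)$ by permuting these two consecutive letters $ij$.
   Context: A plane poset is a finite set with two partial orders $\leq_h,\leq_r$ such that two distinct elements are $\leq_h$-comparable iff they are not $\leq_r$-comparable; $\mathcal{PP}(n)$ is the set of isomorphism classes of plane posets with $n$ elements. On a plane poset, $x\leq y$ iff ($x\leq_h y$ or $x\leq_r y$) is a total order (known fact); each $P\in\mathcal{PP}(n)$ is identified with $\{1,\ldots,n\}$ as a totally ordered set. For $\sigma\in\mathfrak{S}_n$, represented by the word $\sigma(1)\cdots\sigma(n)$, $\Psi_n(\sigma)$ is the plane poset on $\{1,\ldots,n\}$ with $a\leq_h b$ iff ($a\leq b$ and $\sigma^{-1}(a)\leq\sigma^{-1}(b)$) and $a\leq_r b$ iff ($a\leq b$ and $\sigma^{-1}(a)\geq\sigma^{-1}(b)$); it is known that $\Psi_n:\mathfrak{S}_n\to\mathcal{PP}(n)$ is a bijection. For $P\in\mathcal{PP}(n)$, $E(P)=\{(a,b)\mid a<_h b\text{ in }P\}$; $P\preceq Q$ means there exists $(i,j)\in E(P)$ with $E(Q)=E(P)\setminus\{(i,j)\}$. *)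

(* Defs.v *)
From mathcomp Require Import all_boot all_order all_fingroup.
Set Implicit Arguments. Unset Strict Implicit. Unset Printing Implicit Defensive.

(* A plane poset on {1..n} (represented by 'I_n = {0..n-1}, with its natural
   total order being the order "x <=_h y or x <=_r y"), given by its two
   partial orders <=_h and <=_r. *)
Record pposet (n : nat) := PPoset { leh : rel 'I_n ; ler : rel 'I_n }.

(* Psi_n(sigma), where sigma : 'S_n is the word sigma(0) ... sigma(n-1);
   the position of the letter a in the word is sigma^-1 a. *)
Definition Psi n (s : 'S_n) : pposet n :=
  PPoset (fun a b : 'I_n => (a <= b)%N && (s^-1%g a <= s^-1%g b)%N)
         (fun a b : 'I_n => (a <= b)%N && (s^-1%g b <= s^-1%g a)%N).

Definition E n (P : pposet n) : {set 'I_n * 'I_n} :=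
  [set ab | (ab.1 != ab.2) && leh P ab.1 ab.2].

Definition prec_via n (P Q : pposet n) (i j : 'I_n) : Prop :=
  (i, j) \in E P /\ E Q = E P :\ (i, j).

(* Main.v *)
Require Import Defs.
From mathcomp Require Import all_boot all_order all_fingroup.
From mathcomp Require Import zify.

Lemma card_lt_ord n m : (m <= n)%N -> #|[set v : 'I_n | (v < m)%N]| = m.
Proof.
move=> Hmn.
have -> : [set v : 'I_n | (v < m)%N] = [set widen_ord Hmn w | w in 'I_m].
  apply/setP=> v; rewrite inE; apply/idP/imsetP.
    by move=> Hv; exists (Ordinal Hv) => //; apply: val_inj.
  by case=> w _ ->; rewrite /= ltn_ord.
rewrite card_imset ?card_ord //.
by move=> a b /(congr1 val) /= H; apply: val_inj.
Qed.

Lemma card_perm_lt n (r : 'S_n) x : #|[set y | (r y < r x)%N]| = r x.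
Proof.
rewrite -(card_imset _ (@perm_inj _ r)).
have -> : r @: [set y | (r y < r x)%N] = [set v : 'I_n | (v < r x)%N].
  apply/setP=> v; rewrite inE; apply/imsetP/idP.
    by case=> y; rewrite inE => H ->.
  by move=> H; exists (r^-1%g v); rewrite ?inE permKV.
by rewrite card_lt_ord // ltnW.
Qed.

Lemma tperm_adj n (a b u v : 'I_n) : nat_of_ord b = a.+1 ->
  (u, v) != (a, b) -> (v, u) != (a, b) ->
  (nat_of_ord (tperm a b u) < tperm a b v)%N = (u < v)%N.
Proof.
move=> hb; rewrite !xpair_eqE.
case: tpermP => [->|->|/eqP ua /eqP ub]; case: tpermP => [->|->|/eqP va /eqP vb];
  rewrite ?eqxx ?ltnn //= -?val_eqE /= ?hb;
  repeat match goal with H : is_true (_ != _) |- _ => rewrite -val_eqE /= in H end;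
  lia.
Qed.

Lemma memE n (s : 'S_n) a b :
  ((a, b) \in E (Psi s)) = [&& a != b, (a <= b)%N & (s^-1%g a <= s^-1%g b)%N].
Proof. by rewrite inE. Qed.

Theorem lemma14 (n : nat) (P Q : pposet n) (sigma tau : 'S_n) (i j : 'I_n) :
  P = Psi sigma -> Q = Psi tau ->
  prec_via P Q i j ->
  (nat_of_ord (sigma^-1%g j) = (sigma^-1%g i).+1)%N /\
  (forall k : 'I_n, tau k = sigma (tperm (sigma^-1%g i) (sigma^-1%g j) k)).
Proof.
move=> -> -> [Hij HE].
set p := (sigma^-1)%g. set q := (tau^-1)%g.
have HEab a b : ((a, b) \in E (Psi tau)) =
   ((a, b) != (i, j)) && ((a, b) \in E (Psi sigma)) by rewrite HE in_setD1.
move: (HEab i j); rewrite eqxx /= !memE -/p -/q.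
move: Hij; rewrite memE -/p => /and3P [nij leij pij].
rewrite nij leij /= => /negbT qji; rewrite -ltnNge in qji.
have pinj (r : 'S_n) x y : nat_of_ord (r x) = r y -> x = y.
  by move=> /val_inj /perm_inj.
have pneq (r : 'S_n) (x y : 'I_n) : x != y -> nat_of_ord (r x) != r y.
  by move=> H; apply/eqP => /pinj E1; rewrite E1 eqxx in H.
have key (a b : 'I_n) : (a < b)%N -> (a, b) != (i, j) ->
    (p a <= p b)%N = (q a <= q b)%N.
  move=> ab nab; move: (HEab a b); rewrite !memE -/p -/q nab ltnW // /=.
  by rewrite neq_ltn ab /= => ->.
have R (x y : 'I_n) : (x, y) != (i, j) -> (y, x) != (i, j) ->
    (p x < p y)%N = (q x < q y)%N.
  move=> n1 n2; case: (ltngtP x y) => [xy|yx|/val_inj ->]; last by rewrite !ltnn.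
  - have xy' : x != y by rewrite neq_ltn xy.
    by rewrite !ltn_neqAle (pneq _ _ _ xy') (pneq _ _ _ xy') key.
  - by rewrite !ltnNge key.
have pij' : (p i < p j)%N by rewrite ltn_neqAle pneq.
have cons : nat_of_ord (p j) = (p i).+1.
  apply/eqP; rewrite eqn_leq pij' andbT leqNgt; apply/negP => H.
  have Hc : ((p i).+1 < n)%N by apply: (ltn_trans H); apply: ltn_ord.
  set c := sigma (Ordinal Hc).
  have pc : nat_of_ord (p c) = (p i).+1 by rewrite /p /c permK.
  have ci : (c == i) = false by apply/negbTE/eqP => E1; move: pc; rewrite E1 => pc; lia.
  have cj : (c == j) = false by apply/negbTE/eqP => E1; move: pc; rewrite E1 => pc; lia.
  have R1 := R i c; have R2 := R c j.
  rewrite !xpair_eqE eqxx ci cj /= ?andbF in R1 R2.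
  have := R1 isT isT; have := R2 isT isT; rewrite pc H ltnSn => /esym h1 /esym h2.
  lia.
split=> // k.
set t := tperm (p i) (p j).
have Hq x : nat_of_ord (q x) = t (p x).
  transitivity #|[set y | (q y < q x)%N]|; first by rewrite card_perm_lt.
  transitivity #|[set y | ((p * t)%g y < (p * t)%g x)%N]|; last by rewrite card_perm_lt permM.
  apply: eq_card => y; rewrite !inE !permM.
  case E1: ((y, x) == (i, j)).
    move/eqP: E1 => [-> ->]; rewrite /t tpermL tpermR; apply/idP/idP => ?; lia.
  case E2: ((x, y) == (i, j)).
    move/eqP: E2 => [-> ->]; rewrite /t tpermL tpermR; apply/idP/idP => ?; lia.
  have H1 : (p y, p x) != (p i, p j).
    by apply/negP => /eqP [/perm_inj e1 /perm_inj e2]; rewrite e1 e2 eqxx in E1.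
  have H2 : (p x, p y) != (p i, p j).
    by apply/negP => /eqP [/perm_inj e1 /perm_inj e2]; rewrite e1 e2 eqxx in E2.
  rewrite /t tperm_adj //; apply/esym/R; [by rewrite E1 | by rewrite E2].
have H := Hq (tau k); rewrite /q permK in H.
have H' : k = t (p (tau k)) := val_inj H.
by rewrite {2}H' tpermK /p permKV.
Qed.
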